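(* Let $X$ be as in the standing setting with skeleton $X_1,\dots,X_k$. Suppose $x,y\in X$ each lie in no $\operatorname{span}X_l$, and $x\in\operatorname{pos}\{x_i,x_j\}$, $y\in\operatorname{pos}\{y_{i'},y_{j'}\}$ with $x_i\in X_i$, $x_j\in X_j$, $y_{i'}\in X_{i'}$, $y_{j'}\in X_{j'}$, $i\ne j$, $i'\ne j'$. Then the index sets $\{i,j\}$ and $\{i',j'\}$ are either equal or disjoint.
   Context: Standing setting: $X\subset\mathbb R^n\setminus\{0\}$ is a finite set such that $0$ lies in the interior of $\operatorname{conv}X$, no element of $X$ is a positive multiple of another, and every $n+1$ points of $X$ are in good position. A finite set $A$ is in conical position if $0\notin\operatorname{conv}A$ and no point of $A$ lies in the positive hull (set of nonnegative linear combinations, denoted $\operatorname{pos}$) of the other points; it is in good position otherwise. A skeleton of $X$ is a collection of pairwise disjoint subsets $X_1,\dots,X_k\subseteq X$ such that each $X_i$ is the vertex set of a simplex whose relative interior contains $0$ and $\mathbb R^n=\operatorname{span}X_1\oplus\cdots\oplus\operatorname{span}X_k$. *)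

(* Defs.v *)
From HB Require Import structures.
From mathcomp Require Import all_boot all_order all_algebra.
From mathcomp Require Import finmap.
From mathcomp Require Import reals.
Set Implicit Arguments. Unset Strict Implicit. Unset Printing Implicit Defensive.
Import Order.TTheory GRing.Theory Num.Theory.
Local Open Scope ring_scope.
Local Open Scope fset_scope.

Section Defs.
Variables (R : realType) (n : nat).
Notation vec := 'rV[R]_n.

Definition in_pos (A : {fset vec}) (v : vec) : Prop :=
  exists mu : vec -> R, (forall a, a \in A -> 0 <= mu a) /\
    v = \sum_(a <- A) mu a *: a.

Definition in_conv (A : {fset vec}) (v : vec) : Prop :=
  exists mu : vec -> R, [/\ forall a, a \in A -> 0 <= mu a,
    \sum_(a <- A) mu a = 1 & v = \sum_(a <- A) mu a *: a].

Definition in_aff (A : {fset vec}) (v : vec) : Prop :=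
  exists mu : vec -> R, \sum_(a <- A) mu a = 1 /\ v = \sum_(a <- A) mu a *: a.

Definition in_span (A : {fset vec}) (v : vec) : Prop :=
  exists mu : vec -> R, v = \sum_(a <- A) mu a *: a.

Definition conical_position (A : {fset vec}) : Prop :=
  ~ in_conv A 0 /\ forall a, a \in A -> ~ in_pos (A `\ a) a.

Definition good_position (A : {fset vec}) : Prop := ~ conical_position A.

Definition affinely_independent (A : {fset vec}) : Prop :=
  forall mu : vec -> R, \sum_(a <- A) mu a = 0 ->
    \sum_(a <- A) mu a *: a = 0 -> forall a, a \in A -> mu a = 0.

Definition in_interior_conv (A : {fset vec}) (v : vec) : Prop :=
  exists e : R, 0 < e /\ forall w : vec,
    (forall i, `|w ord0 i - v ord0 i| < e) -> in_conv A w.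

Definition in_relint_conv (A : {fset vec}) (v : vec) : Prop :=
  in_aff A v /\
  exists e : R, 0 < e /\ forall w : vec, in_aff A w ->
    (forall i, `|w ord0 i - v ord0 i| < e) -> in_conv A w.

Definition standing_setting (X : {fset vec}) : Prop :=
  [/\ (0 : vec) \notin X,
      in_interior_conv X 0,
      (forall x y (c : R), x \in X -> y \in X -> 0 < c -> y = c *: x -> y = x)
    & (forall A : {fset vec}, A `<=` X -> #|` A| = n.+1 -> good_position A)].

Definition skeleton (X : {fset vec}) (k : nat) (Xs : 'I_k -> {fset vec}) : Prop :=
  [/\ (forall l, Xs l `<=` X),
      (forall l l', l != l' -> [disjoint Xs l & Xs l']),
      (forall l, affinely_independent (Xs l) /\ in_relint_conv (Xs l) 0),
      (forall v : vec, exists w : 'I_k -> vec,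
          (forall l, in_span (Xs l) (w l)) /\ v = \sum_(l < k) w l)
    & (forall w : 'I_k -> vec, (forall l, in_span (Xs l) (w l)) ->
          \sum_(l < k) w l = 0 -> forall l, w l = 0)].

End Defs.

(* Main.v *)
Require Import Defs.
From HB Require Import structures.
From mathcomp Require Import all_boot all_order all_algebra.
From mathcomp Require Import finmap.
From mathcomp Require Import reals.
From mathcomp Require Import ring lra zify.
Set Implicit Arguments. Unset Strict Implicit. Unset Printing Implicit Defensive.
Import Order.TTheory GRing.Theory Num.Theory.
Local Open Scope ring_scope.
Local Open Scope fset_scope.

Section Aux.
Variables (R : realType) (n : nat).
Notation vec := 'rV[R]_n.

Lemma sum_delta (S : {fset vec}) p (c : R) : p \in S ->
  \sum_(u <- S) (if u == p then c else 0) *: u = c *: p.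
Proof.
move=> pS; rewrite (big_fsetD1 p) //= eqxx big1_fset ?addr0 // => u.
by rewrite !inE => /andP[/negPf -> _] _; rewrite scale0r.
Qed.

Lemma sum_deltaR (S : {fset vec}) p (c : R) : p \in S ->
  \sum_(u <- S) (if u == p then c else 0) = c.
Proof.
move=> pS; rewrite (big_fsetD1 p) //= eqxx big1_fset ?addr0 // => u.
by rewrite !inE => /andP[/negPf -> _].
Qed.

Lemma relint_rel (Y : {fset vec}) : affinely_independent Y -> in_relint_conv Y 0 ->
 exists m : vec -> R, [/\ forall u, u \in Y -> 0 < m u, \sum_(u <- Y) m u = 1,
   \sum_(u <- Y) m u *: u = 0 &
   forall nu : vec -> R, \sum_(u <- Y) nu u *: u = 0 ->
     forall u, u \in Y -> nu u = (\sum_(v <- Y) nu v) * m u].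
Proof.
move=> AI [[m [Hm1 Hm0]] [e [e0 He]]]; exists m; split => //; last first.
  move=> nu Hnu u uY.
  have := AI (fun v => nu v - (\sum_(v <- Y) nu v) * m v).
  rewrite sumrB -mulr_sumr Hm1 mulr1 subrr => /(_ erefl); apply: (fun H => _).
  have H2 : \sum_(a <- Y) (nu a - (\sum_(v <- Y) nu v) * m a) *: a = 0.
    under eq_bigr do rewrite scalerBl -scalerA.
    by rewrite sumrB -scaler_sumr -Hm0 scaler0 Hnu subr0.
  by move/(_ H2 u uY)/eqP; rewrite subr_eq0 => /eqP.
move=> q qY.
set M := \sum_(i < n) `|q ord0 i|.
have M0 : 0 <= M by apply: sumr_ge0 => i _; exact: normr_ge0.
set t := e / (1 + M).
have t0 : 0 < t by apply: divr_gt0 => //; lra.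
have tM : t * (1 + M) = e by rewrite /t divfK //; apply: lt0r_neq0; lra.
set rho := fun u : vec => (1 + t) * m u - (if u == q then t else 0).
have Haff : in_aff Y ((- t) *: q).
  exists rho; split.
    by rewrite /rho sumrB -mulr_sumr Hm1 mulr1 sum_deltaR //; ring.
  rewrite /rho; under eq_bigr do rewrite scalerBl -scalerA.
  by rewrite sumrB -scaler_sumr -Hm0 scaler0 sum_delta // sub0r scaleNr.
have [sig [sig0 sig1 sigv]] : in_conv Y ((- t) *: q).
  apply: He => // i; rewrite !mxE subr0 normrM normrN (gtr0_norm t0).
  have : `|q ord0 i| <= M.
    rewrite /M (bigD1 i) //= lerDl; apply: sumr_ge0 => l _; exact: normr_ge0.
  move=> H; apply: (le_lt_trans (ler_wpM2l (ltW t0) H)).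
  have -> : t * M = e - t by rewrite -tM; ring.
  lra.
have := AI (fun v => sig v - rho v).
rewrite sumrB sig1.
have -> : \sum_(a <- Y) rho a = 1.
  by rewrite /rho sumrB -mulr_sumr Hm1 mulr1 sum_deltaR //; ring.
rewrite subrr => /(_ erefl).
have H2 : \sum_(a <- Y) (sig a - rho a) *: a = 0.
  under eq_bigr do rewrite scalerBl.
  rewrite sumrB -sigv /rho; under eq_bigr do rewrite scalerBl -scalerA.
  by rewrite sumrB -scaler_sumr -Hm0 scaler0 sum_delta // sub0r scaleNr subrr.
move=> /(_ H2 q qY)/eqP; rewrite subr_eq0 => /eqP Hs.
have := sig0 q qY; rewrite Hs /rho eqxx => H.
nra.
Qed.


Definition UP (A : {fset vec}) := forall (g : vec -> R) (w : vec),
  \sum_(u <- A) g u *: u = 0 -> (forall u, u \in A -> u != w -> 0 <= g u) ->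
  forall u, u \in A -> g u = 0.

Lemma conical_sub (A B : {fset vec}) : UP A -> B `<=` A -> conical_position B.
Proof.
move=> HA BA; split.
  move=> [s [s0 s1 sv]].
  have H := HA (fun u => if u \in B then s u else 0) 0.
  have Hs : \sum_(u <- A) (if u \in B then s u else 0) *: u = 0.
    rewrite -(big_fset_incl _ BA); last by move=> u _ /negPf ->; rewrite scale0r.
    transitivity (\sum_(u <- B) s u *: u); first by apply: eq_fbigr => u ->.
    by rewrite -sv.
  have Hz : forall u, u \in B -> s u = 0.
    move=> u uB; have := H Hs _ u (fsubsetP BA u uB).
    by rewrite uB; apply => v vA _; case: ifP => // /s0.
  move: s1; rewrite big1_fset; last by move=> u uB _; exact: Hz.
  by move/eqP; rewrite eq_sym oner_eq0.
move=> a aB [mu [mu0 muv]].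
set g := fun u => if u == a then -1 else if u \in B then mu u else 0.
have Hs : \sum_(u <- A) g u *: u = 0.
  rewrite -(big_fset_incl _ BA); last first.
    move=> u _ uB; rewrite /g; case: eqP => [ua|_]; last by rewrite (negPf uB) scale0r.
    by rewrite ua aB in uB.
  rewrite (big_fsetD1 a) //= {1}/g eqxx scaleN1r {1}muv addrC.
  rewrite -sumrB big1_fset // => u; rewrite in_fsetD1 => /andP[ua uB] _.
  by rewrite /g (negPf ua) uB subrr.
have := HA g a Hs.
have Hpos : forall u, u \in A -> u != a -> 0 <= g u.
  move=> u _ ua; rewrite /g (negPf ua); case: ifP => // uB; apply: mu0.
  by rewrite in_fsetD1 ua uB.
move=> /(_ Hpos a (fsubsetP BA a aB)); rewrite /g eqxx => /eqP.
by rewrite oppr_eq0 oner_eq0.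
Qed.

Lemma sub_card (A : {fset vec}) m : (m <= #|` A|)%N ->
  exists B, B `<=` A /\ #|` B| = m.
Proof.
move=> Hm; exists [fset u in take m A]; split.
  by apply/fsubsetP => u; rewrite inE => /mem_take.
by rewrite card_fseq undup_id ?size_takel // take_uniq // fset_uniq.
Qed.

Section Skel.
Variables (X : {fset vec}) (k : nat) (Xs : 'I_k -> {fset vec}).
Hypothesis HS : standing_setting X.
Hypothesis HK : skeleton X Xs.

Definition U := \big[fsetU/fset0]_(l < k) Xs l.

Lemma memU u : (u \in U) <-> exists l, u \in Xs l.
Proof.
split; first by move/bigfcupP => [l _ H]; exists l.
by move=> [l H]; apply/bigfcupP; exists l => //; rewrite mem_index_enum.
Qed.

Lemma XsU l : Xs l `<=` U.
Proof. by apply/fsubsetP => u H; apply/memU; exists l. Qed.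

Lemma disj l l' u : u \in Xs l -> u \in Xs l' -> l = l'.
Proof.
case: HK => _ Hd _ _ _ H1 H2; apply/eqP; apply: contraT => /Hd /fdisjointP H.
by move: (H u H1); rewrite H2.
Qed.

Lemma sum_part (F : vec -> vec) :
  \sum_(u <- U) F u = \sum_(l < k) \sum_(u <- Xs l) F u.
Proof.
have E : forall l, \sum_(u <- Xs l) F u = \sum_(u <- U) (if u \in Xs l then F u else 0).
  move=> l; rewrite -(big_fset_incl _ (XsU l)); last by move=> u _ /negPf ->.
  by apply: eq_fbigr => u ->.
under [RHS]eq_bigr do rewrite E.
rewrite exchange_big /=; apply: eq_fbigr => u /memU [l ul].
rewrite (bigD1 l) //= ul big1 ?addr0 // => l' nl'.
case: ifP => // ul'; by rewrite (disj ul' ul) eqxx in nl'.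
Qed.

Lemma ZL (nu : vec -> R) : \sum_(u <- U) nu u *: u = 0 ->
  forall l, \sum_(u <- Xs l) nu u *: u = 0.
Proof.
rewrite sum_part => H l; case: HK => _ _ _ _ H5.
by apply: (H5 (fun l => \sum_(u <- Xs l) nu u *: u)) => // l'; exists nu.
Qed.

Lemma relX l : exists m : vec -> R, [/\ forall u, u \in Xs l -> 0 < m u,
   \sum_(u <- Xs l) m u = 1, \sum_(u <- Xs l) m u *: u = 0 &
   forall nu : vec -> R, \sum_(u <- Xs l) nu u *: u = 0 ->
     forall u, u \in Xs l -> nu u = (\sum_(v <- Xs l) nu v) * m u].
Proof. by case: HK => _ _ H3 _ _; case: (H3 l) => H1 H2; apply: relint_rel. Qed.

Lemma XsX l u : u \in Xs l -> u \in X.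
Proof. by case: HK => H1 _ _ _ _ /(fsubsetP (H1 l)). Qed.

Lemma two l v : exists u, (u \in Xs l) && (u != v).
Proof.
case: (fset_0Vmem (Xs l `\ v)) => [H0|[u]]; last first.
  by rewrite in_fsetD1 => /andP[H1 H2]; exists u; rewrite H1 H2.
have [m [m0 m1 mv _]] := relX l.
have Hall : forall u, u \in Xs l -> u = v.
  move=> u uX; apply/eqP; apply: contraT => Hn.
  have : u \in Xs l `\ v by rewrite in_fsetD1 Hn uX.
  by rewrite H0.
have : \sum_(u <- Xs l) m u *: u = v.
  by rewrite -[RHS]scale1r -m1 scaler_suml; apply: eq_fbigr => u /Hall ->.
rewrite mv => v0.
case: (fset_0Vmem (Xs l)) => [H1|[u uX]].
  by move: m1; rewrite H1 big_seq_fset0 => /eqP; rewrite eq_sym oner_eq0.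
case: HS => H _ _ _; move: (XsX uX); rewrite (Hall u uX) -v0 => H'.
by rewrite H' in H.
Qed.

Section Span.
Variable q : 'I_k -> vec.
Hypothesis qX : forall l, q l \in Xs l.
Definition Q := \big[fsetU/fset0]_(l < k) [fset q l].

Lemma memQ u : (u \in Q) <-> exists l, u = q l.
Proof.
split; first by move/bigfcupP => [l _]; rewrite inE => /eqP ->; exists l.
by move=> [l ->]; apply/bigfcupP; exists l; rewrite ?mem_index_enum ?inE.
Qed.

Lemma memQX l u : u \in Xs l -> u \in Q -> u = q l.
Proof. by move=> uX /memQ [l' ul']; move: uX; rewrite ul' => /(disj (qX l')) ->. Qed.

Lemma dimUQ : (n <= #|` U `\` Q|)%N.
Proof.
set V := <<(U `\` Q : seq vec)>>%VS.
have HU : forall u, u \in U -> u \in V.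
  move=> u uU; case: (boolP (u \in Q)) => uQ; last first.
    by apply: memv_span; rewrite in_fsetD uQ uU.
  case/memQ: uQ => l ->.
  have [m [m0 _ mv _]] := relX l.
  move: mv; rewrite (big_fsetD1 (q l)) //= => /eqP; rewrite addr_eq0 => /eqP H.
  have -> : q l = (m (q l))^-1 *: (m (q l) *: q l).
    by rewrite scalerA mulVf ?scale1r // lt0r_neq0 // m0.
  rewrite H; apply: memvZ; rewrite memvN big_seq; apply: memv_suml => v vX.
  apply: memvZ; apply: memv_span; move: vX; rewrite in_fsetD1 => /andP[nv vX].
  rewrite in_fsetD; apply/andP; split; last by apply: (fsubsetP (XsU l)).
  by apply/negP => /(memQX vX) /eqP; rewrite (negPf nv).
have HV : (fullv <= V)%VS.
  apply/subvP => w _; case: HK => _ _ _ H4 _; case: (H4 w) => wl [Hwl ->].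
  apply: memv_suml => l _; case: (Hwl l) => mu ->.
  rewrite big_seq; apply: memv_suml => u uX; apply: memvZ; apply: HU; exact: (fsubsetP (XsU l)).
have := dimvS HV; rewrite dimvf dim_matrix => H.
rewrite mul1r in H; exact: (leq_trans H (dim_span _)).
Qed.
End Span.


Lemma neqX l l' u v : u \in Xs l -> v \in Xs l' -> l != l' -> u != v.
Proof. by move=> uX vX; apply: contra => /eqP E; move: uX; rewrite E => /disj/(_ vX) ->. Qed.

Lemma ZQ (q : 'I_k -> vec) (nu : vec -> R) : \sum_(u <- U) nu u *: u = 0 ->
  forall l, q l \in Xs l -> nu (q l) = 0 -> forall u, u \in Xs l -> nu u = 0.
Proof.
move=> H l qX Hq u uX; have [m [m0 _ _ Hm]] := relX l.
have Hl := ZL H l; have := Hm _ Hl _ qX; rewrite Hq => /esym/eqP.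
rewrite mulf_eq0 (negPf (lt0r_neq0 (m0 _ qX))) orbF => /eqP Hs.
by rewrite (Hm _ Hl _ uX) Hs mul0r.
Qed.

Lemma span_pt l u (c : R) : u \in Xs l -> in_span (Xs l) (c *: u).
Proof. by move=> uX; exists (fun v => if v == u then c else 0); rewrite sum_delta. Qed.

Lemma decomp (x xi xj : vec) (i j : 'I_k) : (forall l, ~ in_span (Xs l) x) ->
  xi \in Xs i -> xj \in Xs j -> i != j -> in_pos [fset xi; xj] x ->
  exists a b : R, [/\ 0 < a, 0 < b & x = (a *: xi + b *: xj)%R].
Proof.
move=> xnS xiX xjX nij [mu [mu0 xE]].
have xixj := neqX xiX xjX nij.
have H1 : xi \notin [fset xj] by rewrite inE.
rewrite big_fsetU1 // big_seq_fset1 in xE.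
have {}xE : x = (mu xi *: xi + mu xj *: xj)%R by rewrite xE.
have m1 := mu0 xi (fset1U1 _ _).
have m2 : 0 <= mu xj by apply: mu0; rewrite !inE eqxx orbT.
exists (mu xi), (mu xj); split => //.
- rewrite lt_def m1 andbT; apply/negP => /eqP E.
  by apply: (xnS j); rewrite xE E scale0r add0r; apply: span_pt.
- rewrite lt_def m2 andbT; apply/negP => /eqP E.
  by apply: (xnS i); rewrite xE E scale0r addr0; apply: span_pt.
Qed.

Lemma core (x y xi xj yi yj : vec) (a b c d : R) (i j j' : 'I_k) :
  x \in X -> y \in X -> (forall l, x \notin Xs l) -> (forall l, y \notin Xs l) ->
  xi \in Xs i -> xj \in Xs j -> yi \in Xs i -> yj \in Xs j' ->
  i != j -> i != j' -> j != j' -> 0 < a -> 0 < b -> 0 < c -> 0 < d ->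
  x = (a *: xi + b *: xj)%R -> y = (c *: yi + d *: yj)%R -> False.
Proof.
move=> xX yX xnX ynX xiX xjX yiX yjX nij nij' njj' a0 b0 c0 d0 xE yE.
have xixj := neqX xiX xjX nij.
have xiyj := neqX xiX yjX nij'.
have nji : j != i by rewrite eq_sym.
have nj'i : j' != i by rewrite eq_sym.
have nj'j : j' != j by rewrite eq_sym.
have xjyi := neqX xjX yiX nji.
have xjyj := neqX xjX yjX njj'.
have yiyj := neqX yiX yjX nij'.

have ex : forall l, exists u, (u \in Xs l) && (u \notin [fset xj; yj]).
  move=> l; have [u /andP[uX nu]] := two l (if l == j then xj else yj).
  exists u; rewrite uX /= !inE negb_or; apply/andP; split.
    apply: contra nu => /eqP E; move: uX; rewrite E => /(disj xjX) ->.
    by rewrite eqxx.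
  apply: contra nu => /eqP E; move: uX; rewrite E => /(disj yjX) <-.
  by rewrite (negPf nj'j) eqxx.
pose q l := if l == i then xi else xchoose (ex l).
have qX : forall l, q l \in Xs l.
  by move=> l; rewrite /q; case: eqP => [->|_] //; case/andP: (xchooseP (ex l)).
have qxj : forall l, q l != xj.
  move=> l; rewrite /q; case: ifP => _ //.
  have /andP[_ H] := xchooseP (ex l); rewrite !inE negb_or in H.
  by case/andP: H.
have qyj : forall l, q l != yj.
  move=> l; rewrite /q; case: ifP => _ //.
  have /andP[_ H] := xchooseP (ex l); rewrite !inE negb_or in H.
  by case/andP: H.
pose p := if yi == xi then xchoose (two i xi) else yi.
have pX : p \in Xs i.
  by rewrite /p; case: ifP => // _; case/andP: (xchooseP (two i xi)).
have pxi : p != xi.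
  rewrite /p; case: ifP => [_|/negbT //]; by case/andP: (xchooseP (two i xi)).
have pyi : (yi == xi) || (yi == p) by rewrite /p; case: ifP => //= _; rewrite eqxx.
pose D := p |` Q q.
have memD : forall u, u \in D <-> u = p \/ exists l, u = q l.
  by move=> u; rewrite /D in_fset1U; split => [/orP[/eqP|/(memQ q)]|[->|/(memQ q)->]];
    rewrite ?eqxx ?orbT; auto.
have xiD : xi \in D by apply/memD; right; exists i; rewrite /q eqxx.
have pD : p \in D by apply/memD; left.
have qD : forall l, q l \in D by move=> l; apply/memD; right; exists l.
have xjD : xj \notin D.
  apply/negP => /memD [E|[l E]]; last by move: (qxj l); rewrite -E eqxx.
  by move: (neqX xjX pX nji); rewrite E eqxx.
have yjD : yj \notin D.
  apply/negP => /memD [E|[l E]]; last by move: (qyj l); rewrite -E eqxx.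
  by move: (neqX yjX pX nj'i); rewrite E eqxx.

have nqi : forall l, l != i -> (q l == xi) = false /\ (q l == yi) = false.
  by move=> l nl; split; apply/negbTE; apply: neqX (qX l) _ nl.
have nqj : (q j == xj) = false /\ (q j == yj) = false.
  by split; apply/negbTE.
have nqj' : (q j' == xj) = false /\ (q j' == yj) = false.
  by split; apply/negbTE.
have f1 : (xj == xi) = false by apply/negbTE; rewrite eq_sym.
have f2 : (xj == yi) = false by apply/negbTE.
have f3 : (xj == yj) = false by apply/negbTE.
have g1 : (yj == xi) = false by apply/negbTE; rewrite eq_sym.
have g2 : (yj == xj) = false by apply/negbTE; rewrite eq_sym.
have g3 : (yj == yi) = false by apply/negbTE; rewrite eq_sym.
have h1 : (p == xi) = false by apply/negbTE.
have h2 : (p == xj) = false by apply/negbTE; apply: neqX pX xjX nij.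
have h3 : (p == yj) = false by apply/negbTE; apply: neqX pX yjX nij'.
have k1 : (xi == xj) = false by apply/negbTE.
have k2 : (xi == yj) = false by apply/negbTE.
pose cx u := ((if u == xi then a else 0) + (if u == xj then b else 0))%R.
pose cy u := ((if u == yi then c else 0) + (if u == yj then d else 0))%R.
have inU : forall l u, u \in Xs l -> u \in U by move=> l u; apply: (fsubsetP (XsU l)).
have xiU := inU _ _ xiX. have xjU := inU _ _ xjX.
have yiU := inU _ _ yiX. have yjU := inU _ _ yjX.
have xS : x = \sum_(u <- U) cx u *: u.
  rewrite xE /cx; under eq_bigr do rewrite scalerDl.
  by rewrite big_split /= !sum_delta.
have yS : y = \sum_(u <- U) cy u *: u.
  rewrite yE /cy; under eq_bigr do rewrite scalerDl.
  by rewrite big_split /= !sum_delta.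
have xy : x != y.
  apply/eqP => Exy.
  pose nu u := cx u - cy u.
  have H0 : \sum_(u <- U) nu u *: u = 0.
    under eq_bigr do rewrite scalerBl.
    by rewrite sumrB -xS -yS Exy subrr.
  have Hq : nu (q j) = 0.
    case: (nqi j nji) => e1 e3; case: nqj => e2 e4.
    rewrite /nu /cx /cy e1 e2 e3 e4 /=; lra.
  have := ZQ H0 (qX j) Hq xjX.
  rewrite /nu /cx /cy f1 eqxx f2 f3 /= => b00.
  lra.
have xU : x \notin U by apply/negP => /memU [l]; rewrite (negPf (xnX l)).
have yU : y \notin U by apply/negP => /memU [l]; rewrite (negPf (ynX l)).
pose A := x |` (y |` (U `\` D)).
have xA' : x \notin y |` (U `\` D) by rewrite in_fset1U negb_or xy /= in_fsetD (negPf xU) andbF.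
have yA' : y \notin U `\` D by rewrite in_fsetD (negPf yU) andbF.
have cardA : (n.+1 <= #|` A|)%N.
  rewrite /A !cardfsU1 xA' yA' /=.
  have H1 := dimUQ qX.
  have H2 : U `\` Q q `<=` p |` (U `\` D).
    apply/fsubsetP => u; rewrite in_fsetD => /andP[uQ uU]; rewrite in_fset1U in_fsetD.
    case: (eqVneq u p) => //= up; by rewrite uU andbT /D in_fset1U negb_or up uQ.
  have H3 := fsubset_leq_card H2; rewrite cardfsU1 in H3.
  have := leq_b1 (p \notin U `\` D); move: H1 H3.
  move: (#|` U `\` Q q|) (#|` U `\` D|) (nat_of_bool (p \notin U `\` D)) => z1 z2 z3.
  move=> Ha Hb Hc.
  have Hd : (z3 + z2 <= 1 + z2)%N by rewrite leq_add2r.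
  have He := leq_trans Ha (leq_trans Hb Hd).
  by rewrite ltnS.
have AX : A `<=` X.
  apply/fsubsetP => u; rewrite /A !in_fset1U => /orP[/eqP->//|/orP[/eqP->//|]].
  by rewrite in_fsetD => /andP[_ /memU [l ul]]; apply: XsX ul.
have UPA : UP A.
  move=> g w Hs Hpos.
  pose nu u := (g x * cx u + g y * cy u + (if u \in D then 0 else g u))%R.
  have E3 : \sum_(u <- U `\` D) g u *: u = \sum_(u <- U) (if u \in D then 0 else g u) *: u.
    rewrite -(big_fset_incl _ (fsubsetDl U D)); last first.
      by move=> u uU; rewrite in_fsetD uU andbT negbK => ->; rewrite scale0r.
    by apply: eq_fbigr => u; rewrite in_fsetD => /andP[/negPf -> _].
  have H0 : \sum_(u <- U) nu u *: u = 0.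
    rewrite [RHS](esym Hs) /A big_fsetU1 // big_fsetU1 // E3 /nu.
    under eq_bigr do rewrite !scalerDl -!scalerA.
    by rewrite !big_split /= -!scaler_sumr -xS -yS addrA.
  have xA : x \in A by rewrite /A in_fset1U eqxx.
  have yA : y \in A by rewrite /A !in_fset1U eqxx orbT.
  have xjA : xj \in A.
    by rewrite /A !in_fset1U in_fsetD xjD xjU !orbT.
  have yjA : yj \in A.
    by rewrite /A !in_fset1U in_fsetD yjD yjU !orbT.
  have Ej : (g x * b + g xj = 0)%R.
    have Hq : nu (q j) = 0.
      case: (nqi j nji) => e1 e3; case: nqj => e2 e4.
      rewrite /nu /cx /cy qD e1 e2 e3 e4 /=; lra.
    have := ZQ H0 (qX j) Hq xjX.
    rewrite /nu /cx /cy f1 eqxx f2 f3 (negPf xjD) /=; lra.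
  have Ej' : (g y * d + g yj = 0)%R.
    have Hq : nu (q j') = 0.
      case: (nqi j' nj'i) => e1 e3; case: nqj' => e2 e4.
      rewrite /nu /cx /cy qD e1 e2 e3 e4 /=; lra.
    have := ZQ H0 (qX j') Hq yjX.
    rewrite /nu /cx /cy g1 g2 g3 eqxx (negPf yjD) /=; lra.
  have xyj : x != yj by apply/negP => /eqP E; move: (xnX j'); rewrite E yjX.
  have xjy : xj != y by apply/negP => /eqP E; move: (ynX j); rewrite -E xjX.
  have Hor : g x = 0 \/ g y = 0.
    case: (boolP ((w != x) && (w != xj))) => [/andP[wx wxj]|].
      have := Hpos x xA; rewrite eq_sym => /(_ wx) H1.
      have := Hpos xj xjA; rewrite eq_sym => /(_ wxj) H2.
      left; nra.
    rewrite negb_and !negbK => Hw.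
    have wy : w != y.
      by case/orP: Hw => /eqP ->.
    have wyj : w != yj.
      by case/orP: Hw => /eqP ->.
    have := Hpos y yA; rewrite eq_sym => /(_ wy) H1.
    have := Hpos yj yjA; rewrite eq_sym => /(_ wyj) H2.
    right; nra.
  have [m [m0 _ _ Hm]] := relX i.
  have Hi := Hm _ (ZL H0 i).
  set s := \sum_(v <- Xs i) nu v in Hi.
  have s0 : forall u, u \in Xs i -> nu u = 0 -> s = 0.
    move=> u uX; rewrite (Hi u uX) => /eqP; rewrite mulf_eq0 (negPf (lt0r_neq0 (m0 _ uX))) orbF.
    by move/eqP.
  have Hsp := Hi p pX. have Hsxi := Hi xi xiX.
  have Hcase : (nu p = 0 /\ nu xi = g x * a + g y * c)%R \/
                    (nu p = g y * c /\ nu xi = g x * a)%R.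
    case/orP: pyi => [/eqP yixi|/eqP yip].
      have e1 : (p == yi) = false by rewrite yixi h1.
      have e2 : (xi == yi) = true by rewrite yixi eqxx.
      left; split; first by rewrite /nu /cx /cy pD h1 h2 h3 e1 /=; ring.
      by rewrite /nu /cx /cy xiD eqxx k1 k2 e2 /=; ring.
    have e1 : (p == yi) = true by rewrite yip eqxx.
    have e2 : (xi == yi) = false by rewrite yip eq_sym h1.
    right; split; first by rewrite /nu /cx /cy pD h1 h2 h3 e1 /=; ring.
    by rewrite /nu /cx /cy xiD eqxx k1 k2 e2 /=; ring.
  have [gx0 gy0] : g x = 0 /\ g y = 0.
    have Key : (g x = 0 -> g y = 0) /\ (g y = 0 -> g x = 0).
      case: Hcase => [[np nx]|[np nx]]; split => H.
      - have s00 := s0 p pX np; move: Hsxi; rewrite nx s00 mul0r H => E; nra.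
      - have s00 := s0 p pX np; move: Hsxi; rewrite nx s00 mul0r H => E; nra.
      - have s00 : s = 0 by apply: (s0 xi xiX); rewrite nx H mul0r.
        move: Hsp; rewrite np s00 mul0r => E; nra.
      - have s00 : s = 0 by apply: (s0 p pX); rewrite np H mul0r.
        move: Hsxi; rewrite nx s00 mul0r => E; nra.
    case: Key => K1 K2; case: Hor => H.
      by split => //; apply: K1.
    by split => //; apply: K2.
  have nu0 : forall u, nu u = if u \in D then 0 else g u.
    by move=> u; rewrite /nu gx0 gy0 !mul0r !add0r.
  have Z : forall l u, u \in Xs l -> nu u = 0.
    by move=> l u ul; apply: (ZQ H0 (qX l)) => //; rewrite nu0 qD.
  move=> u; rewrite /A !in_fset1U => /orP[/eqP->//|/orP[/eqP->//|]].
  rewrite in_fsetD => /andP[uD /memU [l ul]].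
  by have := Z l u ul; rewrite nu0 (negPf uD).
have [B [BA cB]] := sub_card cardA.
have := conical_sub UPA BA.
case: HS => _ _ _ H4; exact: (H4 B (fsubset_trans BA AX) cB).
Qed.

End Skel.
End Aux.

Theorem proposition5p2 (R : realType) (n : nat) (X : {fset 'rV[R]_n})
  (k : nat) (Xs : 'I_k -> {fset 'rV[R]_n}) :
  standing_setting X -> skeleton X Xs ->
  forall (x y xi xj yi' yj' : 'rV[R]_n) (i j i' j' : 'I_k),
  x \in X -> y \in X ->
  (forall l, ~ in_span (Xs l) x) -> (forall l, ~ in_span (Xs l) y) ->
  xi \in Xs i -> xj \in Xs j -> i != j -> in_pos [fset xi; xj] x ->
  yi' \in Xs i' -> yj' \in Xs j' -> i' != j' -> in_pos [fset yi'; yj'] y ->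
  ([set i; j] = [set i'; j'] :> {set 'I_k})%SET \/
  ([set i; j] :&: [set i'; j'] = set0 :> {set 'I_k})%SET.
Proof.
move=> HS HK x y xi xj yi yj i j i' j' xX yX xnS ynS xiX xjX nij xP yiX yjX nij' yP.
have [a [b [a0 b0 xE]]] := decomp HK xnS xiX xjX nij xP.
have [c [d [c0 d0 yE]]] := decomp HK ynS yiX yjX nij' yP.
have xnX : forall l, x \notin Xs l.
  by move=> l; apply/negP => H; apply: (xnS l); rewrite -[x]scale1r; apply: span_pt.
have ynX : forall l, y \notin Xs l.
  by move=> l; apply/negP => H; apply: (ynS l); rewrite -[y]scale1r; apply: span_pt.
have xE' : x = (b *: xj + a *: xi)%R by rewrite addrC.
have yE' : y = (d *: yj + c *: yi)%R by rewrite addrC.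
have nji : j != i by rewrite eq_sym.
have [eii|nii] := eqVneq i i'.
  subst i'; have [ejj|njj] := eqVneq j j'; first by left; rewrite ejj.
  exfalso; exact: (core HS HK xX yX xnX ynX xiX xjX yiX yjX nij nij' njj a0 b0 c0 d0 xE yE).
have [ejj|njj] := eqVneq j j'.
  subst j'; exfalso.
  have nji' : j != i' by rewrite eq_sym.
  exact: (core HS HK xX yX xnX ynX xjX xiX yjX yiX nji nji' nii b0 a0 d0 c0 xE' yE').
have [eij|nij2] := eqVneq i j'.
  subst j'; have [eji|nji2] := eqVneq j i'; first by left; rewrite eji setUC.
  exfalso; exact: (core HS HK xX yX xnX ynX xiX xjX yjX yiX nij nii nji2 a0 b0 d0 c0 xE yE').
have [eji|nji2] := eqVneq j i'.
  subst i'; exfalso.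
  exact: (core HS HK xX yX xnX ynX xjX xiX yiX yjX nji nij' nij2 b0 a0 c0 d0 xE' yE).
right; apply/setP => u; rewrite !inE; apply/negbTE/negP.
move=> /andP[/orP[]/eqP-> /orP[]/eqP E].
- by rewrite E eqxx in nii.
- by rewrite E eqxx in nij2.
- by rewrite E eqxx in nji2.
- by rewrite E eqxx in njj.
Qed.
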